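(* Let $\alpha\in\mathbb N$ and $n\ge 0$. The inverse of the matrix $$\left(\frac{1}{\alpha\binom{\alpha+i+j}{\alpha}}\right)_{0\le i,j\le n}$$ has integer entries. *)

(* Defs.v *)
From mathcomp Require Import all_boot all_order all_algebra.
Set Implicit Arguments. Unset Strict Implicit. Unset Printing Implicit Defensive.
Import Order.TTheory GRing.Theory Num.Theory.
Local Open Scope ring_scope.

Definition binom_recip_mx (alpha n : nat) : 'M[rat]_(n.+1) :=
  \matrix_(i < n.+1, j < n.+1) (alpha%:R * ('C(alpha + i + j, alpha))%:R)^-1.

(* Main.v *)
Require Import Defs.
From mathcomp Require Import all_boot all_order all_algebra.
From mathcomp Require Import zify ring lra.
Import Order.TTheory GRing.Theory Num.Theory.
Local Open Scope ring_scope.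

Definition S (k : nat) (f : nat -> rat) : rat :=
  \sum_(0 <= m < k.+1) (-1)^+m * ('C(k,m))%:R * f m.

Lemma S_shift k f : S k.+1 f = S k f - S k (fun m => f m.+1).
Proof.
have E m : (-1)^+m.+1 * ('C(k.+1, m.+1))%:R * f m.+1 =
   (-1)^+m.+1 * ('C(k, m.+1))%:R * f m.+1 - (-1)^+m * ('C(k,m))%:R * f m.+1.
  by rewrite binS natrD exprS; ring.
rewrite /S big_nat_recl // (eq_bigr _ (fun m _ => E m)) sumrB.
rewrite [in RHS]big_nat_recl // [X in _ + (X - _)]big_nat_recr //=.
by rewrite (bin_small (ltnSn k)) !bin0 mulr0 mul0r addr0 addrA.

Qed.

Lemma S_lin k f g : S k f - S k g = S k (fun m => f m - g m).
Proof. by rewrite /S -sumrB; apply: eq_bigr => m _; ring. Qed.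

Lemma size_diff_shift (p : {poly rat}) k :
  (size p <= k.+1)%N -> (size (p - (p \Po ('X + 1)))%R <= k)%N.
Proof.
move=> hp.
have s2 : size ('X + 1 : {poly rat}) = 2.
  by rewrite -[1]opprK -polyCN size_XsubC.
have hs : size (p \Po ('X + 1)) = size p by rewrite size_comp_poly2.
apply/leq_sizeP => j hj.
rewrite coefB.
have z (q : {poly rat}) : (size q <= j)%N -> q`_j = 0 by move=> h; move/leq_sizeP: h; apply.
have hk : (size p < k.+1)%N \/ size p = k.+1 by lia.
case: hk => [hlt|heq].
  by rewrite (z p) ?(z (p \Po ('X+1))) ?subr0 ?hs //; lia.
have [hjk|->] : (k < j)%N \/ j = k by lia.
  by rewrite (z p) ?(z (p \Po ('X+1))) ?subr0 ?hs //; lia.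
have := lead_coef_comp p (eq_ind_r (fun x => (1 < x)%N) (ltnSn 1) s2).
rewrite lead_coefE hs lead_coefE heq /=.
have -> : lead_coef ('X + 1 : {poly rat}) = 1.
  by rewrite lead_coefDl ?lead_coefX // size_polyX size_polyC; case: eqP.
by rewrite expr1n mulr1 => ->; rewrite subrr.
Qed.

Lemma S_ext k f g : (forall m, f m = g m) -> S k f = S k g.
Proof. by move=> h; apply: eq_bigr => m _; rewrite h. Qed.
Arguments S_ext {k f} g.

Lemma S_poly k (p : {poly rat}) : (size p <= k)%N -> S k (fun m => p.[m%:R]) = 0.
Proof.
elim: k p => [|k IH] p hp.
  move: hp; rewrite size_poly_leq0 => /eqP ->.
  by rewrite /S big_nat1 horner0 mulr0.
have E : S k (fun m => p.[m.+1%:R]) = S k (fun m => (p \Po ('X+1)).[m%:R]).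
  by apply: S_ext => m; rewrite horner_comp !hornerE natr1.
rewrite S_shift /= E.
rewrite S_lin (S_ext (fun m => (p - (p \Po ('X+1))).[m%:R])).
  by rewrite IH //; apply: size_diff_shift.
by move=> m; rewrite hornerD hornerN.
Qed.

Lemma factF_neq0 x : (x`!)%:R != 0 :> rat.
Proof. by rewrite pnatr_eq0 -lt0n fact_gt0. Qed.
Lemma natS_neq0 x : (x.+1)%:R != 0 :> rat.
Proof. by rewrite pnatr_eq0. Qed.

Lemma S1 k c : S k (fun m => ((m + c.+1)%:R)^-1) =
   ((k`!)%:R * (c`!)%:R) / ((k + c.+1)`!)%:R.
Proof.
elim: k c => [|k IH] c.
  rewrite /S big_nat1 expr0 bin0 fact0 add0n factS natrM.
  by field; rewrite factF_neq0 /= addrC natr1 natS_neq0.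
have E : S k (fun m => ((m.+1 + c.+1)%:R)^-1) = S k (fun m => ((m + c.+2)%:R)^-1).
  by apply: S_ext => m; rewrite addSnnS.
rewrite S_shift E !IH.
have e1 : (k + c.+2)`! = ((k + c.+1).+1 * (k+c.+1)`!)%N by rewrite addnS factS.
have e2 : (k.+1 + c.+1)`! = ((k + c.+1).+1 * (k+c.+1)`!)%N by rewrite addSn factS.
have eM : ((k + c.+1).+1)%:R = k.+1%:R + c.+1%:R :> rat by rewrite -natrD addSn.
rewrite e1 e2 (factS c) (factS k) !natrM eM.
have h1 := factF_neq0 (k + c.+1).
have h2 : k.+1%:R + c.+1%:R != 0 :> rat by rewrite -natrD addSn natS_neq0.
move: h1 h2; set N := (k + c.+1)`!%:R; set x := k.+1%:R; set y := c.+1%:R.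
move=> h1 h2.
field; rewrite h1 /=; apply: lt0r_neq0; have := ler0n rat k; have := ler0n rat c; lra.
Qed.

Lemma S_scale k K f : S k (fun m => K * f m) = K * S k f.
Proof. by rewrite /S mulr_sumr; apply: eq_bigr => m _; ring. Qed.

Lemma S_add k f g : S k (fun m => f m + g m) = S k f + S k g.
Proof. by rewrite /S -big_split; apply: eq_bigr => m _ /=; ring. Qed.

Lemma fact_prod x y : ((x + y)`! = x`! * \prod_(0 <= t < y) (x + t.+1))%N.
Proof.
elim: y => [|y IH]; first by rewrite addn0 big_geq // muln1.
by rewrite big_nat_recr //= addnS factS IH; ring.
Qed.

Lemma factQ x y : (x + y)`!%:R = x`!%:R * \prod_(0 <= t < y) (x%:R + t.+1%:R) :> rat.
Proof.
rewrite fact_prod natrM natr_prod; congr (_ * _).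
by apply: eq_bigr => t _; rewrite natrD.
Qed.

Lemma binQ n x : (x <= n)%N -> 'C(n, x)%:R = n`!%:R / (x`!%:R * (n - x)`!%:R) :> rat.
Proof.
move=> h; rewrite -(bin_fact h) !natrM.
by field; rewrite !factF_neq0.
Qed.

Definition Aq b s : rat := (b.+1%:R * ('C(b.+1 + s, b.+1))%:R)^-1.

Lemma Aq_fact b s : Aq b s = b`!%:R * s`!%:R / (b.+1 + s)`!%:R.
Proof.
rewrite /Aq binQ ?leq_addr // addKn factS natrM.
by field; rewrite !factF_neq0 /= addrC natr1 natS_neq0.
Qed.

Lemma claim1 b j d :
  S (j + d.+1) (fun m => 'C(j + d.+1 + b + m, m)%:R * Aq b (m + j)) = 0.
Proof.
set P := (\prod_(0 <= t < j) ('X - (- (t.+1)%:R)%:P) *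
          \prod_(0 <= t < d) ('X - (- (b.+1 + j + t.+1)%:R)%:P) : {poly rat}).
have sP : (size P <= j + d.+1)%N.
  rewrite size_mul ?size_prod_XsubC ?size_iota; first lia.
    by rewrite -size_poly_eq0 size_prod_XsubC.
  by rewrite -size_poly_eq0 size_prod_XsubC.
have key m : 'C(j + d.+1 + b + m, m)%:R * Aq b (m + j) =
             (b`!%:R / (j + d.+1 + b)`!%:R) * P.[m%:R].
  rewrite hornerM !horner_prod binQ ?leq_addl // addnK Aq_fact.
  have e1 : (j + d.+1 + b + m = (b.+1 + (m + j)) + d)%N by lia.
  rewrite e1 (factQ (b.+1 + (m+j)) d) (factQ m j).
  have E1 : \prod_(0 <= t < d) ((b.+1 + (m + j))%:R + t.+1%:R) =
            \prod_(0 <= t < d) ('X - (- (b.+1 + j + t.+1)%:R)%:P).[m%:R] :> rat.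
    by apply: eq_bigr => t _; rewrite !hornerE !natrD; ring.
  have E2 : \prod_(0 <= t < j) (m%:R + t.+1%:R) =
            \prod_(0 <= t < j) ('X - (- (t.+1)%:R)%:P).[m%:R] :> rat.
    by apply: eq_bigr => t _; rewrite !hornerE; ring.
  rewrite E1 E2.
  by field; rewrite !factF_neq0.
rewrite (S_ext (fun m => (b`!%:R / (j + d.+1 + b)`!%:R) * P.[m%:R])) //.
by rewrite S_scale S_poly // mulr0.
Qed.

Lemma prodneg k c : \prod_(0 <= t < k) ((t.+1)%:R - (c + k)%:R) =
   (-1)^+k * \prod_(0 <= t < k) ((c + t)%:R) :> rat.
Proof.
elim: k => [|k IH]; first by rewrite !big_geq // expr0 mulr1.
rewrite big_nat_recl // big_nat_recr //=.
have -> : \prod_(0 <= i < k) (i.+2%:R - (c + k.+1)%:R) =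
          \prod_(0 <= i < k) (i.+1%:R - (c + k)%:R) :> rat.
  by apply: eq_bigr => i _; rewrite addnS -!natr1; ring.
rewrite IH addnS -natr1 exprS; ring.
Qed.

Lemma claim2 b k : S k (fun m => 'C(k + b + m, m)%:R * Aq b (m + k)) =
   (-1)^+k * k`!%:R * (b + k)`!%:R / (k + (b + k).+1)`!%:R.
Proof.
set P := \prod_(0 <= t < k) ('X - (- (t.+1)%:R)%:P) : {poly rat}.
set x : rat := - ((b + k).+1)%:R.
have [q hq] : exists q, P - P.[x]%:P = q * ('X - x%:P).
  by apply/factor_theorem; rewrite /root hornerD hornerN hornerC subrr.
have sP : size P = k.+1 by rewrite size_prod_XsubC size_iota subn0.
have sq : (size q <= k)%N.
  case: (eqVneq q 0) => [->|qn0]; first by rewrite size_poly0.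
  have := size_polyD P (- P.[x]%:P).
  rewrite hq size_Mmonic ?monicXsubC // size_XsubC size_polyN sP.
  have h1 : (size (P.[x]%:P) <= 1)%N by rewrite size_polyC leq_b1.
  rewrite natn addn2 /= size_polyC; case: (P.[x] != 0) => /=; rewrite leq_max => /orP[] //; rewrite ltnS leqn0 => /eqP ->; exact: leq0n.
have hPx : P.[x] = (-1)^+k * (b + k)`!%:R / b`!%:R.
  rewrite horner_prod.
  have -> : \prod_(0 <= t < k) ('X - (- (t.+1)%:R)%:P).[x] =
            \prod_(0 <= t < k) ((t.+1)%:R - (b.+1 + k)%:R) :> rat.
    by apply: eq_bigr => t _; rewrite !hornerE /x addSn; ring.
  rewrite prodneg factQ.
  have -> : \prod_(0 <= t < k) (b.+1 + t)%:R = \prod_(0 <= t < k) (b%:R + t.+1%:R) :> rat.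
    by apply: eq_bigr => t _; rewrite addSnnS natrD.
  by field; rewrite factF_neq0.
have key m : 'C(k + b + m, m)%:R * Aq b (m + k) =
   (b`!%:R / (k + b)`!%:R) * (q.[m%:R] + P.[x] * ((m + (b + k).+1)%:R)^-1).
  have hPm : P.[m%:R] = q.[m%:R] * (m + (b + k).+1)%:R + P.[x].
    have := congr1 (fun p => p.[m%:R]) hq.
    rewrite /= hornerM !hornerE => h.
    by rewrite -[LHS](subrK P.[x]) h /x natrD; ring.
  rewrite binQ ?leq_addl // addnK Aq_fact.
  have e : (b.+1 + (m + k) = (k + b + m).+1)%N by lia.
  rewrite e factS natrM (factQ m k).
  have -> : \prod_(0 <= t < k) (m%:R + t.+1%:R) = P.[m%:R] :> rat.
    by rewrite /P horner_prod; apply: eq_bigr => t _; rewrite !hornerE; ring.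
  rewrite hPm.
  have e2 : (k + b + m).+1 = (m + (b + k).+1)%N by lia.
  rewrite e2.
  have hz : (m + (b + k).+1)%:R != 0 :> rat by rewrite addnS natS_neq0.
  move: hz; generalize ((m + (b + k).+1)%:R : rat) => z hz.
  field; rewrite !factF_neq0 ?andbT; apply: lt0r_neq0; have := ler0n rat m; have := ler0n rat b; have := ler0n rat k; lra.
rewrite (S_ext (fun m => (b`!%:R / (k + b)`!%:R) * (q.[m%:R] + P.[x] * ((m + (b + k).+1)%:R)^-1))) //.
rewrite S_scale S_add S_poly // add0r S_scale S1 hPx addnC.
by field; rewrite !factF_neq0.
Qed.

Definition cz b k m : int := (-1)^+m * ('C(k,m) * 'C(k + b + m, m))%N%:Z.

Lemma cqE b k m : (cz b k m)%:~R = (-1)^+m * 'C(k,m)%:R * 'C(k + b + m, m)%:R :> rat.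
Proof. rewrite /cz rmorphM rmorphXn rmorphN1 -mulrA; congr (_ * _); rewrite -natrM; by []. Qed.

Section Mx.
Variables (b n : nat).
Local Notation N := n.+1.

Definition Czm : 'M[int]_N := \matrix_(k, m) cz b k m.
Definition Cm : 'M[rat]_N := map_mx intr Czm.
Definition Am : 'M[rat]_N := binom_recip_mx b.+1 n.

Lemma Am_entry (i j : 'I_N) : Am i j = Aq b (i + j).
Proof. by rewrite mxE /Aq addnA. Qed.

Lemma Cm_entry (i j : 'I_N) : Cm i j = (cz b i j)%:~R.
Proof. by rewrite !mxE. Qed.

Lemma U_sum (k j : nat) : (k < N)%N ->
  \sum_(m < N) (cz b k m)%:~R * Aq b (m + j) =
  S k (fun m => 'C(k + b + m, m)%:R * Aq b (m + j)).
Proof.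
move=> hk.
rewrite -(big_mkord xpredT (fun m => (cz b k m)%:~R * Aq b (m + j))).
rewrite (@big_cat_nat _ _ _ k.+1) //= [X in _ + X]big_nat_cond [X in _ + X]big1 ?addr0.
  by apply: eq_bigr => m _; rewrite cqE; ring.
move=> m /andP[/andP[hm _] _]; rewrite cqE bin_small //; ring.
Qed.


Lemma CA_entry (k j : 'I_N) :
  (Cm *m Am) k j = S k (fun m => 'C(k + b + m, m)%:R * Aq b (m + j)).
Proof.
rewrite mxE -U_sum //; apply: eq_bigr => m _; by rewrite Cm_entry Am_entry.
Qed.

Lemma CA_low (k j : 'I_N) : (j < k)%N -> (Cm *m Am) k j = 0.
Proof.
move=> h; rewrite CA_entry.
have e : (k : nat) = (j + (k - j.+1).+1)%N by lia.
rewrite e; exact: claim1.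
Qed.

Lemma Cm_up (k j : 'I_N) : (k < j)%N -> Cm k j = 0.
Proof. by move=> h; rewrite Cm_entry cqE bin_small // mulr0 mul0r. Qed.

Lemma AC_entry (k j : 'I_N) : (Am *m Cm^T) j k = (Cm *m Am) k j.
Proof.
rewrite !mxE; apply: eq_bigr => m _; rewrite !mxE mulrC.
by rewrite addnAC.
Qed.

Lemma D_entry (k l : 'I_N) :
  (Cm *m Am *m Cm^T) k l = (k == l)%:R / (2 * k + b.+1)%:R.
Proof.
case: (ltngtP k l) => h.
- have -> : (k == l) = false by apply/eqP => e; rewrite e ltnn in h.
  rewrite mul0r -mulmxA mxE big1 // => j _.
  rewrite AC_entry.
  case: (ltnP k j) => hj; first by rewrite Cm_up // mul0r.
  by rewrite CA_low ?mulr0 //; apply: leq_ltn_trans h.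
- have -> : (k == l) = false by apply/eqP => e; rewrite e ltnn in h.
  rewrite mul0r mxE big1 // => j _.
  rewrite [_^T _ _]mxE.
  case: (ltnP j k) => hj; first by rewrite CA_low // mul0r.
  by rewrite Cm_up ?mulr0 //; apply: leq_trans h hj.
- have e : k = l by apply: val_inj.
  subst l; rewrite eqxx mxE (bigD1 k) //= big1 ?addr0; last first.
    move=> j hj; rewrite [_^T _ _]mxE.
    case: (ltngtP j k) => hjk.
    + by rewrite CA_low // mul0r.
    + by rewrite Cm_up ?mulr0.
    + by move: hj; rewrite (val_inj hjk) eqxx.
  rewrite [_^T _ _]mxE CA_entry claim2 Cm_entry cqE binn binQ ?leq_addl // addnK.
  have e1 : (k + (b + k).+1 = (k + b + k).+1)%N by lia.
  have e2 : (2 * k + b.+1 = (k + b + k).+1)%N by lia.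
  rewrite e1 e2 factS natrM (addnC b k).
  have hs : (-1)^+k * (-1)^+k = 1 :> rat by rewrite -exprMn mulrNN mulr1 expr1n.
  apply: (@eq_trans _ _ (((-1)^+k * (-1)^+k) * (1 / (k + b + k).+1%:R))); last by rewrite hs mul1r div1r.
  field; rewrite !factF_neq0 ?andbT; apply: lt0r_neq0; have := ler0n rat k; have := ler0n rat b; lra.
Qed.

Definition Dzm : 'M[int]_N := \matrix_(k, l) ((k == l)%:R * (2 * k + b.+1)%:R).
Definition Dq : 'M[rat]_N := map_mx intr Dzm.

Lemma DD : (Cm *m Am *m Cm^T) *m Dq = 1%:M.
Proof.
apply/matrixP => k l; rewrite mxE (bigD1 k) //= big1 ?addr0; last first.
  move=> j hj; rewrite D_entry.
  have -> : (k == j) = false by apply/negbTE; rewrite eq_sym.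
  by rewrite mul0r mul0r.
rewrite D_entry eqxx !mxE rmorphM /= !rmorph_nat.
have hz : (2 * k + b.+1)%:R != 0 :> rat by rewrite addnS natS_neq0.
case: (k == l); last by rewrite !mul0r mulr0.
by rewrite !mul1r mulVf.
Qed.

End Mx.

Theorem theorem4p2 (alpha n : nat) (halpha : (0 < alpha)%N) :
  binom_recip_mx alpha n \in unitmx /\
  forall i j : 'I_n.+1, exists z : int, (invmx (binom_recip_mx alpha n)) i j = z%:~R.
Proof.
case: alpha halpha => // b _.
change (binom_recip_mx b.+1 n) with (Am b n).
have key : Am b n *m ((Cm b n)^T *m Dq b n *m Cm b n) = 1%:M.
  have h1 : Cm b n *m (Am b n *m (Cm b n)^T *m Dq b n) = 1%:M.
    by rewrite !mulmxA DD.
  have h2 := mulmx1C h1.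
  by rewrite !mulmxA; rewrite ?mulmxA in h2.
have [hu _] := mulmx1_unit key.
split => // i j.
have -> : invmx (Am b n) = (Cm b n)^T *m Dq b n *m Cm b n.
  by rewrite -[invmx _]mulmx1 -key mulKmx.
rewrite /Cm /Dq map_trmx -!map_mxM.
by exists (((Czm b n)^T *m Dzm b n *m Czm b n) i j); rewrite mxE.
Qed.
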